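(* Let $X=\{x_j:j\in J\}\subset\mathbb{R}^2$ be finite with $n=|J|$, quadratic min-power centre $s^*$, centroid $M$, and let $r\in J$ be such that $x_r$ is a point of $X$ farthest from $M$. Then $\|M_r-x_r\|\leq\|s^*-x_r\|$.
   Context: $s^*$ is the unique minimiser of $P(s)=\sum_{i\in J}\|s-x_i\|^2+\max_{i\in J}\|s-x_i\|^2$; $M=\frac1n\sum_ix_i$; $M_r=\frac{1}{n+1}\big(x_r+\sum_{i\in J}x_i\big)$. *)

(* Defs.v *)
From HB Require Import structures.
From mathcomp Require Import all_boot all_order all_algebra.
From mathcomp Require Import reals.
Set Implicit Arguments. Unset Strict Implicit. Unset Printing Implicit Defensive.
Import Order.TTheory GRing.Theory Num.Theory.
Local Open Scope ring_scope.

Definition pt (R : realType) := (R * R)%type.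

Definition dist2 (R : realType) (a b : pt R) : R :=
  (a.1 - b.1) ^+ 2 + (a.2 - b.2) ^+ 2.
Definition dist (R : realType) (a b : pt R) : R := Num.sqrt (dist2 a b).

(* P(s) = sum_{i in J} ||s - x_i||^2 + max_{i in J} ||s - x_i||^2
   (the max of nonnegative reals; base 0 is harmless for J nonempty). *)
Definition Pfun (R : realType) (J : finType) (x : J -> pt R) (s : pt R) : R :=
  \sum_(i : J) dist2 s (x i) + \big[Num.max/0]_(i : J) dist2 s (x i).

Definition centroid (R : realType) (J : finType) (x : J -> pt R) : pt R :=
  ((\sum_(i : J) (x i).1) / #|J|%:R, (\sum_(i : J) (x i).2) / #|J|%:R).

Definition Mr (R : realType) (J : finType) (x : J -> pt R) (r : J) : pt R :=
  (((x r).1 + \sum_(i : J) (x i).1) / (#|J|.+1)%:R,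
   ((x r).2 + \sum_(i : J) (x i).2) / (#|J|.+1)%:R).

(* Main.v *)
Require Import Defs.
From HB Require Import structures.
From mathcomp Require Import all_boot all_order all_algebra.
From mathcomp Require Import reals ring lra.
Import Order.TTheory GRing.Theory Num.Theory.
Local Open Scope ring_scope.

Lemma descent (R : realFieldType) (n s1 s2 m1 m2 r1 r2 k1 k2 t : R) :
  0 < t ->
  (n+1)*t*((m1-r1)^+2+(m2-r2)^+2) =
    - (((n+1)*s1 - r1 - n* m1)*(m1-r1) + ((n+1)*s2 - r2 - n* m2)*(m2-r2)) ->
  ((n+1)*s1 - r1 - n* m1)*(m1-r1) + ((n+1)*s2 - r2 - n* m2)*(m2-r2) < 0 ->
  (k1-m1)^+2+(k2-m2)^+2 <= (r1-m1)^+2+(r2-m2)^+2 ->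
  (n*((s1+t*(m1-r1))^+2+(s2+t*(m2-r2))^+2) - 2*((s1+t*(m1-r1))*(n* m1)+(s2+t*(m2-r2))*(n* m2)))
   + ((s1+t*(m1-r1)-k1)^+2+(s2+t*(m2-r2)-k2)^+2)
  < (n*(s1^+2+s2^+2) - 2*(s1*(n* m1)+s2*(n* m2))) + ((s1-k1)^+2+(s2-k2)^+2).
Proof.
set a := (_ + _ * (m2 - r2)).
set E := (_ ^+ 2 + _ ^+ 2).
move=> t0 htE ha hk.
set b := (k1 - r1)*(m1-r1) + (k2-r2)*(m2-r2).
have hb : 0 <= b.
  have e2 : 2 * b = (k1-r1)^+2+(k2-r2)^+2 + E - ((k1-m1)^+2+(k2-m2)^+2).
    rewrite /b /E; ring.
  have : 0 <= (k1-r1)^+2+(k2-r2)^+2 by rewrite addr_ge0 ?sqr_ge0.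
  move: hk e2; rewrite /E.
  have -> : (r1-m1)^+2 = (m1-r1)^+2 by rewrite -sqrrN opprB.
  have -> : (r2-m2)^+2 = (m2-r2)^+2 by rewrite -sqrrN opprB.
  lra.
rewrite -subr_lt0.
have -> : (n*((s1+t*(m1-r1))^+2+(s2+t*(m2-r2))^+2) - 2*((s1+t*(m1-r1))*(n* m1)+(s2+t*(m2-r2))*(n* m2)))
   + ((s1+t*(m1-r1)-k1)^+2+(s2+t*(m2-r2)-k2)^+2)
  - ((n*(s1^+2+s2^+2) - 2*(s1*(n* m1)+s2*(n* m2))) + ((s1-k1)^+2+(s2-k2)^+2))
  = t * a - 2 * t * b + t * ((n+1)*t*E + a).
  rewrite /a /b /E; ring.
rewrite htE addNr mulr0 addr0.
have : 0 < t * (- a) by rewrite mulr_gt0 // oppr_gt0.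
have : 0 <= t * b by rewrite mulr_ge0 // ltW.
lra.
Qed.

Lemma final (R : realFieldType) (n s1 s2 m1 m2 r1 r2 : R) :
  0 < n ->
  0 <= ((n+1)*s1 - r1 - n* m1)*(m1-r1) + ((n+1)*s2 - r2 - n* m2)*(m2-r2) ->
  ((r1 + n* m1)/(n+1) - r1)^+2 + ((r2 + n* m2)/(n+1) - r2)^+2
  <= (s1 - r1)^+2 + (s2 - r2)^+2.
Proof.
move=> n0 ha.
have n1 : n + 1 != 0 by rewrite lt0r_neq0 // addr_gt0.
set c := n / (n+1).
have c0 : 0 <= c by rewrite divr_ge0 // ltW // addr_gt0.
have -> : (r1 + n * m1)/(n+1) - r1 = c * (m1 - r1) by rewrite /c; field.
have -> : (r2 + n * m2)/(n+1) - r2 = c * (m2 - r2) by rewrite /c; field.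
set E := (m1-r1)^+2 + (m2-r2)^+2.
set w := (s1-r1)*(m1-r1) + (s2-r2)*(m2-r2).
have hw : 0 <= w - c * E.
  have e : (n+1)*(w - c * E) = ((n+1)*s1 - r1 - n * m1)*(m1-r1) + ((n+1)*s2 - r2 - n * m2)*(m2-r2).
    by rewrite /c /w /E; field.
  have n1p : 0 < n + 1 by rewrite addr_gt0.
  rewrite -e in ha.
  by rewrite -(pmulr_rge0 _ n1p).
have id : (s1 - r1)^+2 + (s2 - r2)^+2 - ((c * (m1 - r1))^+2 + (c * (m2 - r2))^+2)
   = (s1 - r1 - c * (m1 - r1))^+2 + (s2 - r2 - c * (m2 - r2))^+2 + 2 * c * (w - c * E).
  rewrite /w /E; ring.
rewrite -subr_ge0 id.
rewrite addr_ge0 ?sqr_ge0 // ?addr_ge0 ?sqr_ge0 // mulr_ge0 // mulr_ge0 //.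
Qed.


Theorem lemma9 (R : realType) (J : finType) (x : J -> pt R)
  (hJ : (0 < #|J|)%N) (hx : injective x)
  (sstar : pt R) (hmin : forall s : pt R, Pfun x sstar <= Pfun x s)
  (r : J) (hr : forall j : J, dist (x j) (centroid x) <= dist (x r) (centroid x)) :
  dist (Mr x r) (x r) <= dist sstar (x r).
Proof.
set n : R := #|J|%:R.
have n0 : 0 < n by rewrite /n ltr0n.
set m1 := (centroid x).1.
set m2 := (centroid x).2.
have hS1 : \sum_(i : J) (x i).1 = n * m1 by rewrite /m1 /centroid /= -/n mulrC divfK // lt0r_neq0.
have hS2 : \sum_(i : J) (x i).2 = n * m2 by rewrite /m2 /centroid /= -/n mulrC divfK // lt0r_neq0.
set Q := \sum_(i : J) ((x i).1^+2 + (x i).2^+2).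
have hsum : forall s : pt R, \sum_(i : J) dist2 s (x i)
    = n * (s.1^+2 + s.2^+2) - 2 * (s.1 * (n * m1) + s.2 * (n * m2)) + Q.
  move=> s.
  have h : forall i, dist2 s (x i) = (s.1^+2+s.2^+2) + ((-2*s.1)*(x i).1 + (-2*s.2)*(x i).2)
      + ((x i).1^+2+(x i).2^+2) by move=> i; rewrite /dist2; ring.
  rewrite (eq_bigr _ (fun i _ => h i)) big_split /= big_split /= sumr_const.
  rewrite big_split /= -!mulr_sumr hS1 hS2 -/Q.
  rewrite (_ : forall y : R, y *+ #|J| = n * y); last by move=> y; rewrite /n mulr_natl.
  ring.
have d2ge0 : forall a b : pt R, 0 <= dist2 a b by move=> a b; rewrite /dist2 addr_ge0 ?sqr_ge0.
have hge : forall s k, dist2 s (x k) <= \big[Num.max/0]_(i : J) dist2 s (x i).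
  by move=> s k; rewrite (bigD1 k) //= le_max lexx.
have hlt : forall s c, (forall k, dist2 s (x k) < c) -> \big[Num.max/0]_(i : J) dist2 s (x i) < c.
  move=> s c h; case/card_gt0P: hJ => k0 _.
  apply: (big_ind (fun v => v < c)).
  - exact: le_lt_trans (d2ge0 _ _) (h k0).
  - by move=> u v hu hv; rewrite gt_max hu hv.
  - by move=> i _; apply: h.
have hr2 : forall k, dist2 (x k) (centroid x) <= dist2 (x r) (centroid x).
  by move=> k; move: (hr k); rewrite /dist ler_sqrt.
set s1 := sstar.1. set s2 := sstar.2. set r1 := (x r).1. set r2 := (x r).2.
set a := ((n+1)*s1 - r1 - n * m1)*(m1-r1) + ((n+1)*s2 - r2 - n * m2)*(m2-r2).
have ha : 0 <= a.
  rewrite leNgt; apply/negP => ha.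
  set E := (m1-r1)^+2 + (m2-r2)^+2.
  have E0 : 0 < E.
    rewrite lt_neqAle addr_ge0 ?sqr_ge0 // andbT eq_sym; apply/negP => /eqP.
    move/eqP; rewrite paddr_eq0 ?sqr_ge0 // !sqrf_eq0 => /andP[/eqP h1 /eqP h2].
    by move: ha; rewrite /a h1 h2 !mulr0 addr0 ltxx.
  have n1 : 0 < n + 1 by rewrite addr_gt0.
  set t := - a / ((n+1) * E).
  have t0 : 0 < t by rewrite /t divr_gt0 ?oppr_gt0 // mulr_gt0.
  have htE : (n+1)*t*E = - a.
    by rewrite /t; field; rewrite !lt0r_neq0.  
  have := hmin (s1 + t*(m1-r1), s2 + t*(m2-r2)).
  rewrite /Pfun !hsum /=.
  set B := \big[Num.max/0]_(i : J) dist2 sstar (x i).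
  set F0 := n * (s1^+2 + s2^+2) - 2 * (s1 * (n * m1) + s2 * (n * m2)).
  set F1 := n * ((s1 + t*(m1-r1))^+2 + (s2 + t*(m2-r2))^+2)
     - 2 * ((s1 + t*(m1-r1)) * (n * m1) + (s2 + t*(m2-r2)) * (n * m2)).
  have : \big[Num.max/0]_(i : J) dist2 (s1 + t*(m1-r1), s2 + t*(m2-r2)) (x i) < F0 + B - F1.
    apply: hlt => k.
    have hk := hge sstar k.
    have hd := @descent _ n s1 s2 m1 m2 r1 r2 (x k).1 (x k).2 t t0 htE ha (hr2 k).
    move: hk hd; rewrite /dist2 /= -/F0 -/F1 -/s1 -/s2 -/B.
    lra.
  rewrite -/F0 -/F1 -/B -/s1 -/s2.
  lra.
rewrite /dist ler_sqrt ?d2ge0 // /dist2 /Mr /= hS1 hS2 -natr1 -/n -/r1 -/r2.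
exact: final.
Qed.
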